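(* Let $X$ be a Banach space and $Y$ a closed subspace of $X$ satisfying the $(\ast)$-condition, witnessed by a projection $P$ on $X^\ast$, and let $\delta_{\{Y\}}(\varepsilon)=\inf\{\|\varphi\|-\|P\varphi\|:\varphi\in B_{X^\ast},\ \|\varphi-P\varphi\|\ge\varepsilon\}$ (with $\inf\emptyset=\infty$). Let $\alpha$ be an ordinal and $\varepsilon>0$. If $\varphi\in s^\alpha_{3\varepsilon}(B_{X^\ast})$ and $\|\varphi|_Y\|>1-\delta_{\{Y\}}(\varepsilon)$, then $\varphi|_Y\in s^\alpha_\varepsilon(B_{Y^\ast})$.
   Context: $Y$ satisfies the $(\ast)$-condition, witnessed by $P$, if $P$ is a linear projection on $X^\ast$ with $\ker P=Y^\perp$, $\|P\|\le1$, and for every $\varepsilon>0$ there is $\delta(\varepsilon)>0$ with $\|\varphi-P\varphi\|<\varepsilon$ whenever $\|\varphi\|=1$ and $\|\varphi+P\varphi\|>2-\delta(\varepsilon)$. Szlenk derivations: for weak*-compact $K$ in a dual space, $s_\varepsilon(K)=\{x^\ast\in K:\ \text{every weak*-neighborhood } V \text{ of } x^\ast \text{ has } \mathrm{diam}(V\cap K)>\varepsilon\}$, $s^0_\varepsilon(K)=K$, $s^{\beta+1}_\varepsilon(K)=s_\varepsilon(s^\beta_\varepsilon(K))$, $s^\alpha_\varepsilon(K)=\bigcap_{\beta<\alpha}s^\beta_\varepsilon(K)$ for limit $\alpha$. *)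

(* Defs.v *)
From HB Require Import structures.
From mathcomp Require Import all_boot all_order all_algebra.
From mathcomp Require Import all_classical all_reals all_analysis.
Set Implicit Arguments. Unset Strict Implicit. Unset Printing Implicit Defensive.
Import Order.TTheory GRing.Theory Num.Theory.
Import numFieldNormedType.Exports.
Local Open Scope classical_set_scope.
Local Open Scope ring_scope.

(* An ordinal alpha is represented as an element of a well-ordered type W;
   the transfinite iteration up to alpha depends only on the initial segment
   of W below alpha, i.e. on the order type alpha. *)
Record wellorder := WellOrder {
  wo_car :> Type;
  wo_lt : wo_car -> wo_car -> Prop;
  wo_wf : well_founded wo_lt;
  wo_trans : forall x y z, wo_lt x y -> wo_lt y z -> wo_lt x z;
  wo_total : forall x y, wo_lt x y \/ x = y \/ wo_lt y x }.

Definition wo_is_pred (W : wellorder) (g b : W) : Prop :=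
  wo_lt g b /\ forall d, wo_lt d b -> d = g \/ wo_lt d g.

(* One step of transfinite recursion:
   beta = 0       : K
   beta = gamma+1 : s (iterate gamma)
   beta limit     : intersection of iterates gamma < beta *)
Definition iter_step (T : Type) (W : wellorder) (s : set T -> set T) (K : set T)
  (b : W) (rec : forall g : W, wo_lt g b -> set T) : set T :=
  match pselect (exists g, wo_is_pred g b) with
  | left H => let (g, Hg) := cid H in s (rec g (proj1 Hg))
  | right _ =>
      if pselect (exists g, wo_lt g b)
      then [set x | forall g (h : wo_lt g b), rec g h x]
      else K
  end.

Definition transfinite_iter (T : Type) (W : wellorder) (s : set T -> set T)
  (K : set T) : W -> set T :=
  Fix (@wo_wf W) (fun _ => set T) (@iter_step T W s K).

Section Dual.
Context {R : realType} {V : normedModType R}.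

Definition is_dual (f : V -> R) : Prop :=
  (forall (a : R) (x y : V), f (a *: x + y) = a * f x + f y) /\ continuous f.

Definition dnorm (f : V -> R) : R :=
  sup [set `|f x| | x in [set x : V | `|x| <= 1]].

Definition dual_ball : set (V -> R) := [set f | is_dual f /\ dnorm f <= 1].

Definition wstar_open (U : set (V -> R)) : Prop :=
  forall f, U f -> exists (xs : seq V) (r : R), 0 < r /\
    forall g, is_dual g -> (forall x, x \in xs -> `|g x - f x| < r) -> U g.

Definition wstar_nbhd (f : V -> R) (N : set (V -> R)) : Prop :=
  exists U, wstar_open U /\ U f /\ (forall g, is_dual g -> U g -> N g).

Definition ddiam (A : set (V -> R)) : \bar R :=
  ereal_sup [set r | exists g h, A g /\ A h /\ r = (dnorm (fun x => g x - h x))%:E].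

Definition szlenk_deriv (eps : R) (K : set (V -> R)) : set (V -> R) :=
  [set f | K f /\ forall N, wstar_nbhd f N -> (eps%:E < ddiam (N `&` K))%E].

End Dual.

Arguments dual_ball {R} V.

(* Y is a closed subspace of X, given as the range of a linear isometry iota.
   Y^perp = { phi in X^* | phi o iota = 0 }. *)
Definition star_condition {R : realType} {X Y : normedModType R}
  (iota : Y -> X) (P : (X -> R) -> (X -> R)) : Prop :=
  (forall phi, is_dual phi -> is_dual (P phi)) /\
  [/\ (forall (a : R) phi psi, is_dual phi -> is_dual psi ->
          P (fun x => a * phi x + psi x) = (fun x => a * P phi x + P psi x)),
      (forall phi, is_dual phi -> P (P phi) = P phi),
      (forall phi, is_dual phi ->
          (P phi = (fun _ => 0) <-> forall y, phi (iota y) = 0)),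
      (forall phi, is_dual phi -> dnorm (P phi) <= dnorm phi)
    & (forall e : R, 0 < e -> exists d : R, 0 < d /\
         forall phi, is_dual phi -> dnorm phi = 1 ->
           dnorm (fun x => phi x + P phi x) > 2 - d ->
           dnorm (fun x => phi x - P phi x) < e)].

Definition delta_Y {R : realType} {X : normedModType R}
  (P : (X -> R) -> (X -> R)) (eps : R) : \bar R :=
  ereal_inf [set ((dnorm phi - dnorm (P phi))%:E) | phi in
     [set phi | dual_ball X phi /\ eps <= dnorm (fun x => phi x - P phi x)]].

(* Main.v *)
Require Import Defs.
From HB Require Import structures.
From mathcomp Require Import all_boot all_order all_algebra.
From mathcomp Require Import all_classical all_reals all_analysis.
From mathcomp Require Import lra ring.
From mathcomp Require Import lra ring.
Import Order.TTheory GRing.Theory Num.Theory.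
Import numFieldNormedType.Exports.
Local Open Scope classical_set_scope.
Local Open Scope ring_scope.
Set Implicit Arguments. Unset Strict Implicit. Unset Printing Implicit Defensive.
Section Dn.
Context {R : realType} {V : normedModType R}.
Definition lin (f : V -> R) := forall (a : R) (x y : V), f (a *: x + y) = a * f x + f y.
Lemma lin0 f : lin f -> f 0 = 0.
Proof. by move=> lf; have := lf 1 0 0; rewrite scale1r addr0 mul1r; lra. Qed.
Lemma linZ f a x : lin f -> f (a *: x) = a * f x.
Proof. by move=> lf; have := lf a x 0; rewrite addr0 lin0 // addr0. Qed.

Lemma dual_bound f : @is_dual R V f -> exists M : R, 0 <= M /\ forall x, `|f x| <= M * `|x|.
Proof.
move=> [lf cf]; have := cf 0 => /cvgrPdist_lt /(_ 1 ltr01); rewrite lin0 //.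
move=> /nbhs_ballP [e /= e0 He].
exists (2 / e); split; first by rewrite divr_ge0 // ltW.
move=> x; have [->|x0] := eqVneq x 0; first by rewrite lin0 // !normr0 mulr0.
have nx : 0 < `|x| by rewrite normr_gt0.
set u := (e / 2 / `|x|) *: x.
have hu : `|f u| < 1.
  have := He u; rewrite -ball_normE /ball_ sub0r normrN /= sub0r normrN; apply.
  rewrite /u normrZ ger0_norm ?divr_ge0 // ?ltW // divfK ?gt_eqF //.
  lra.
move: hu; rewrite /u linZ // normrM ger0_norm; last by rewrite !divr_ge0 // ltW.
move=> hu.
have : `|f x| < 2 / e * `|x|.
  rewrite -(@ltr_pM2l _ (e / 2 / `|x|)) ?divr_gt0 //.
  suff -> : e / 2 / `|x| * (2 / e * `|x|) = 1 by [].
  by field; rewrite ?gt_eqF.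
by move/ltW.
Qed.

Lemma DS_ub f : @is_dual R V f -> has_ubound [set `|f x| | x in [set x : V | `|x| <= 1]].
Proof.
move=> /dual_bound [M [M0 HM]]; exists M => _ [x /= x1 <-].
by rewrite (le_trans (HM x)) // ler_piMr.
Qed.

Lemma DS_0 f : lin f -> [set `|f x| | x in [set x : V | `|x| <= 1]] 0.
Proof. by move=> lf; exists 0; rewrite /= ?normr0 ?lin0 ?normr0. Qed.

Lemma dnorm_ub f x : @is_dual R V f -> `|f x| <= @dnorm R V f * `|x|.
Proof.
move=> df; have ub := ub_le_sup (DS_ub df).
have [->|x0] := eqVneq x 0; first by rewrite (lin0 (proj1 df)) !normr0 mulr0.
have nx : 0 < `|x| by rewrite normr_gt0.
have : `|f (`|x|^-1 *: x)| <= dnorm f.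
  apply: ub; exists (`|x|^-1 *: x) => //=.
  by rewrite normrZ ger0_norm ?invr_ge0 ?(ltW nx) // mulVf ?gt_eqF.
rewrite (linZ _ _ (proj1 df)).
rewrite normrM ger0_norm ?invr_ge0 ?(ltW nx) // -(ler_pM2l nx) mulrA mulfV ?gt_eqF //.
by rewrite mul1r mulrC.
Qed.

Lemma dnorm_ge0 f : @is_dual R V f -> 0 <= @dnorm R V f.
Proof.
move=> df; apply: (ub_le_sup (DS_ub df)); exact: DS_0 (proj1 df).
Qed.

Lemma dnorm_le f c : lin f -> 0 <= c -> (forall x, `|f x| <= c * `|x|) ->
  @dnorm R V f <= c.
Proof.
move=> lf c0 H; apply: ge_sup; first by exists 0; exact: DS_0.
move=> _ [x /= x1 <-]; by rewrite (le_trans (H x)) // ler_piMr.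
Qed.

Lemma dnorm_gt f m : @is_dual R V f -> m < @dnorm R V f ->
  exists x, `|x| <= 1 /\ m < `|f x|.
Proof.
move=> df /(sup_gt _) []; first by exists 0; exact: DS_0 (proj1 df).
by move=> _ [x /= x1 <-] h; exists x.
Qed.

Lemma lin_dual f M : lin f -> (forall x, `|f x| <= M * `|x|) -> @is_dual R V f.
Proof.
move=> lf fM; split => // x; apply/cvgrPdist_lt => e e0.
have M1 : 0 < `|M| + 1 by rewrite ltr_pwDr // normr_ge0.
have : \forall t \near x, `|x - t| < e / (`|M| + 1).
  by move: (@cvg_id _ (nbhs x)) => /cvgrPdist_lt; apply; rewrite divr_gt0.
apply: filterS => t Ht.
have -> : f x - f t = f (x - t).
  have -> : x - t = (-1) *: t + x by rewrite scaleN1r addrC.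
  by rewrite lf mulN1r addrC.
rewrite (le_lt_trans (fM _)) // (@le_lt_trans _ _ ((`|M| + 1) * `|x - t|)) //.
  by rewrite ler_wpM2r // (le_trans (real_ler_norm _)) ?num_real // lerDl.
by rewrite mulrC -ltr_pdivlMr.
Qed.

Lemma dual_lin f : @is_dual R V f -> lin f.
Proof. by case. Qed.

Lemma dual_comb (a : R) f g : @is_dual R V f -> @is_dual R V g ->
  @is_dual R V (fun x => a * f x + g x).
Proof.
move=> df dg; apply: (@lin_dual _ (`|a| * dnorm f + dnorm g)).
  move=> b x y; rewrite (dual_lin df) (dual_lin dg); ring.
move=> x; rewrite (le_trans (ler_normD _ _)) // mulrDl normrM -mulrA.
by rewrite lerD ?ler_wpM2l ?dnorm_ub.
Qed.

Lemma dual_sub f g : @is_dual R V f -> @is_dual R V g ->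
  @is_dual R V (fun x => f x - g x).
Proof.
move=> df dg; have := dual_comb (-1) dg df.
by have -> : (fun x => -1 * g x + f x) = (fun x => f x - g x)
  by apply: funext => x; ring.
Qed.
End Dn.
Section HB.
Context {R : realType} {V Y : normedModType R} (iota : Y -> V)
  (iota_lin : forall (a : R) (y z : Y), iota (a *: y + z) = a *: iota y + iota z)
  (f : Y -> R) (lf : forall (a : R) (x y : Y), f (a *: x + y) = a * f x + f y)
  (c : R) (c0 : 0 <= c) (fc : forall y, f y <= c * `|iota y|).

Definition lgraph (G : set (V * R)) :=
  [/\ forall x a b, G (x, a) -> G (x, b) -> a = b,
      forall t x y a b, G (x, a) -> G (y, b) -> G (t *: x + y, t * a + b),
      forall x a, G (x, a) -> a <= c * `|x|
    & forall y, G (iota y, f y)].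

Definition base : set (V * R) := [set p | exists y, p = (iota y, f y)].

Lemma iotaB y z : iota (y - z) = iota y - iota z.
Proof. by rewrite -[y - z]addrC -scaleN1r iota_lin scaleN1r addrC. Qed.
Lemma fB y z : f (y - z) = f y - f z.
Proof. by rewrite -[y - z]addrC -scaleN1r lf mulN1r addrC. Qed.

Lemma lgraph_base : lgraph base.
Proof.
split.
- move=> x a b [y [-> ->]] [y' [E ->]].
  have h1 := fc (y - y'); have h2 := fc (y' - y).
  move: h1 h2; rewrite !iotaB !fB E subrr normr0 mulr0; lra.
- move=> t x y a b [u [-> ->]] [v [-> ->]]; exists (t *: u + v).
  by rewrite iota_lin lf.
- by move=> x a [y [-> ->]].
- by move=> y; exists y.
Qed.

Lemma lg0 G x a : lgraph G -> G (x, a) -> G (0, 0).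
Proof.
move=> [_ L _ _] h; have := L (-1) _ _ _ _ h h.
by rewrite scaleN1r mulN1r !addNr.
Qed.

Lemma lgZ G t x a : lgraph G -> G (x, a) -> G (t *: x, t * a).
Proof.
move=> lG h; have z := lg0 lG h; case: lG => [_ L _ _].
by have := L t _ _ _ _ h z; rewrite !addr0.
Qed.

Lemma lgD G x y a b : lgraph G -> G (x, a) -> G (y, b) -> G (x + y, a + b).
Proof.
move=> [_ L _ _] h1 h2; by have := L 1 _ _ _ _ h1 h2; rewrite scale1r mul1r.
Qed.

Lemma lg_extend G x0 : lgraph G -> ~ (exists a, G (x0, a)) ->
  exists G1, lgraph G1 /\ G `<=` G1 /\ exists a, G1 (x0, a).
Proof.
move=> lG nx.
have G00 : G (0, 0) by case: (lG) => [_ _ _ B]; exact: lg0 lG (B 0).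
case: (lG) => [Fn L Dm B].
pose S := [set r | exists y b, G (y, b) /\ r = b - c * `|y - x0|].
have key z d y b : G (z, d) -> G (y, b) -> b - c * `|y - x0| <= c * `|z + x0| - d.
  move=> hz hy; have := Dm _ _ (lgD lG hy hz).
  have : `|y + z| <= `|y - x0| + `|z + x0|.
    have -> : y + z = (y - x0) + (z + x0) by rewrite addrACA addNr addr0.
    exact: ler_normD.
  move=> /(ler_wpM2l c0); rewrite mulrDr; lra.
have S0 : S !=set0 by exists (0 - c * `|0 - x0|); exists 0, 0.
have Sub : has_ubound S.
  by exists (c * `|0 + x0| - 0) => _ [y [b [hy ->]]]; exact: key.
pose ce := sup S.
have HS1 y b : G (y, b) -> b - c * `|y - x0| <= ce.
  by move=> hy; apply: ub_le_sup => //; exists y, b.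
have HS2 z d : G (z, d) -> ce <= c * `|z + x0| - d.
  by move=> hz; apply: ge_sup => // _ [y [b [hy ->]]]; exact: key.
pose G1 := [set p | exists x a t, G (x, a) /\ p = (x + t *: x0, a + t * ce)].
exists G1; split; last split.
- split.
  + move=> v a1 a2 [x [a [t [hx [E1 E2]]]]] [x' [a' [t' [hx' [E1' E2']]]]].
    rewrite E2 E2'.
    have [tt|tt] := eqVneq t t'.
      subst t'; move: E1'; rewrite E1 => /addIr ex; subst x'.
      by rewrite (Fn _ _ _ hx hx').
    exfalso; apply: nx.
    have E : (t - t') *: x0 = x' - x.
      have Eq : x + t *: x0 = x' + t' *: x0 by rewrite -E1 -E1'.
      rewrite scalerBl -(addKr x (t *: x0)) Eq.
      by rewrite addrA addrK addrC.
    have h := lgD lG hx' (lgZ (-1) lG hx); rewrite scaleN1r mulN1r in h.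
    have := lgZ (t - t')^-1 lG h; rewrite -E scalerA mulVf ?subr_eq0 // scale1r.
    by move=> h2; eexists; exact: h2.
  + move=> s v w a1 a2 [x [a [t [hx [-> ->]]]]] [y [b [u [hy [-> ->]]]]].
    exists (s *: x + y), (s * a + b), (s * t + u); split; first exact: L.
    congr pair; first by rewrite scalerDr scalerA scalerDl addrACA.
    ring.
  + move=> v a1 [x [a [t [hx [-> ->]]]]].
    have [t0|tn] := eqVneq t 0.
      by subst t; rewrite scale0r mul0r !addr0; exact: Dm.
    have [tp|tneg] := ltP 0 t.
      have h := HS2 _ _ (lgZ t^-1 lG hx).
      have hn : t * `|t^-1 *: x + x0| = `|x + t *: x0|.
        rewrite -[t in t * _]ger0_norm ?ltW // -normrZ scalerDr scalerA.
        by rewrite mulfV ?scale1r.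
      have := ler_wpM2l (ltW tp) h.
      have -> : t * (c * `|t^-1 *: x + x0| - t^-1 * a) =
                c * (t * `|t^-1 *: x + x0|) - a by field.
      rewrite hn; lra.
    have sp : 0 < - t by rewrite oppr_gt0 lt_neqAle tn.
    have h := HS1 _ _ (lgZ (- t)^-1 lG hx).
    have hn : (- t) * `|(- t)^-1 *: x - x0| = `|x + t *: x0|.
      rewrite -[X in X * _]ger0_norm ?ltW // -normrZ scalerDr scalerA.
      rewrite mulfV ?gt_eqF // scale1r scalerN scaleNr opprK //.
    have := ler_wpM2l (ltW sp) h.
    have -> : (- t) * ((- t)^-1 * a - c * `|(- t)^-1 *: x - x0|) =
              a - c * ((- t) * `|(- t)^-1 *: x - x0|).
      by field; exact: tn.
    rewrite hn; lra.
  + move=> y; exists (iota y), (f y), 0; split; first exact: B.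
    by rewrite scale0r mul0r !addr0.
- move=> [x a] hx; exists x, a, 0; split => //.
  by rewrite scale0r mul0r !addr0.
- exists (0 + ce); exists 0, 0, 1; split => //.
  by rewrite scale1r mul1r !add0r.
Qed.

Lemma base_sub G : lgraph G -> base `<=` G.
Proof. by move=> [_ _ _ B] p [y ->]. Qed.

Lemma hahn_banach : exists g : V -> R,
  [/\ (forall (a : R) x y, g (a *: x + y) = a * g x + g y),
      (forall y, g (iota y) = f y) & (forall x, `|g x| <= c * `|x|)].
Proof.
pose T := {G : set (V * R) | lgraph G}.
pose t0 : T := exist _ base lgraph_base.
pose Rl := fun A B : T => `[< sval A `<=` sval B >].
have [M HM] : exists M, premaximal Rl M.
  apply: (@ZL_preorder T t0 Rl).
  - by move=> A; apply/asboolP.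
  - move=> A B C /asboolP h1 /asboolP h2; apply/asboolP; exact: subset_trans h1 h2.
  - move=> A tot.
    pose U := fun p => base p \/ exists G : T, A G /\ sval G p.
    have common p q : U p -> U q ->
        exists H : T, sval H `<=` U /\ sval H p /\ sval H q.
      have sub0 : sval t0 `<=` U by move=> z hz; left.
      have subA G : A G -> sval G `<=` U by move=> AG z hz; right; exists G.
      move=> [bp|[G [AG Gp]]] [bq|[H [AH Hq]]].
      + by exists t0.
      + exists H; split; first exact: subA.
        by split => //; apply: base_sub (svalP H) _ bp.
      + exists G; split; first exact: subA.
        by split => //; apply: base_sub (svalP G) _ bq.
      + have [/asboolP GH|/asboolP HG] := tot _ _ AG AH.
        * by exists H; split; [exact: subA|split => //; exact: GH].
        * by exists G; split; [exact: subA|split => //; exact: HG].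
    have lU : lgraph U.
      split.
      + move=> x a b ha hb; have [H [_ [h1 h2]]] := common _ _ ha hb.
        by case: (svalP H) => Fn _ _ _; exact: Fn h1 h2.
      + move=> t x y a b ha hb; have [H [sH [h1 h2]]] := common _ _ ha hb.
        by apply: sH; case: (svalP H) => _ L _ _; exact: L.
      + move=> x a ha; have [H [_ [h1 _]]] := common _ _ ha ha.
        by case: (svalP H) => _ _ Dm _; exact: Dm.
      + by move=> y; left; exists y.
    by exists (exist _ U lU) => s As; apply/asboolP => p sp; right; exists s.
have tot x : exists a, sval M (x, a).
  have [//|nx] := pselect (exists a, sval M (x, a)).
  have [G1 [lG1 [sub [a ha]]]] := lg_extend (svalP M) nx.
  have /asboolP h := HM (exist _ G1 lG1) (asboolT sub).
  by exfalso; apply: nx; exists a; exact: h.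
pose g x := projT1 (cid (tot x)).
have gP x : sval M (x, g x) by rewrite /g; case: cid.
case: (svalP M) => Fn L Dm B.
exists g; split.
- by move=> a x y; apply: Fn (gP _) (L _ _ _ _ _ (gP x) (gP y)).
- by move=> y; apply: Fn (gP _) (B y).
- move=> x; rewrite ler_norml Dm ?gP // andbT.
  have := Dm _ _ (lgZ (-1) (svalP M) (gP x)).
  by rewrite scaleN1r mulN1r normrN lerNl.
Qed.
End HB.
Section T. Context {R : realType}.
Lemma t1 (d : \bar R) (x : R) : (1%:E - d < x%:E)%E -> exists m : R, (1%:E - d < m%:E)%E /\ (forall rr : R, (d <= rr%:E)%E -> 1 - rr < m) /\ m < x.
Proof.
case: d => [d| |].
- change (((1 - d)%:E < x%:E)%E -> exists m : R, ((1 - d)%:E < m%:E)%E /\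
    (forall rr : R, (d%:E <= rr%:E)%E -> 1 - rr < m) /\ m < x).
  rewrite lte_fin => h; exists ((1 - d + x) / 2); split; last split.
  + by rewrite lte_fin; lra.
  + by move=> rr; rewrite lee_fin; lra.
  + lra.
- move=> _; exists (x - 1); split; last split.
  + by rewrite addeNy ltNyr.
  + by move=> rr; rewrite leye_eq.
  + lra.
- by rewrite addey.
Qed.
End T.
Section Aux.
Context {R : realType}.

Lemma list_open (I : eqType) (V : normedModType R) (pt : I -> V) (ys : seq I)
  (cc : I -> R) (r : R) (f : V -> R) :
  (forall y, y \in ys -> `|f (pt y) - cc y| < r) ->
  exists r', 0 < r' /\ forall g : V -> R,
    (forall x, x \in map pt ys -> `|g x - f x| < r') ->
    forall y, y \in ys -> `|g (pt y) - cc y| < r.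
Proof.
elim: ys => [|a ys IH] H.
  by exists 1; split => // g _ y; rewrite in_nil.
have [r1 [r1p H1]] : exists r', 0 < r' /\ forall g : V -> R,
    (forall x, x \in map pt ys -> `|g x - f x| < r') ->
    forall y, y \in ys -> `|g (pt y) - cc y| < r.
  by apply: IH => y hy; apply: H; rewrite in_cons hy orbT.
have ha := H a (mem_head a ys).
exists (Order.min r1 (r - `|f (pt a) - cc a|)); split.
  by rewrite lt_min r1p subr_gt0 ha.
move=> g Hg y; rewrite in_cons => /orP [/eqP -> | hy].
  have := Hg (pt a) (mem_head _ _); rewrite lt_min => /andP [_ h2].
  have -> : g (pt a) - cc a = (g (pt a) - f (pt a)) + (f (pt a) - cc a).
    by rewrite addrA subrK.
  by rewrite (le_lt_trans (ler_normD _ _)) //; lra.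
apply: H1 hy => x hx; have := Hg x; rewrite /= in_cons hx orbT => /(_ isT).
by rewrite lt_min => /andP [].
Qed.

Lemma ti_unfold T (W : wellorder) s K (b : W) :
  @transfinite_iter T W s K b = @iter_step T W s K b (fun g _ => transfinite_iter s K g).
Proof.
rewrite /transfinite_iter Fix_eq //.
move=> x f g H; rewrite /iter_step; case: pselect => [h|h].
  by case: (cid h) => g' Hg; rewrite H.
case: pselect => [h2|h2] //=; apply: funext => y; apply: propext.
by split => Hy g' h'; [rewrite -H | rewrite H]; exact: Hy.
Qed.

Lemma ti_sub T (W : wellorder) (s : set T -> set T) K :
  (forall A, s A `<=` A) -> forall b : W, transfinite_iter s K b `<=` K.
Proof.
move=> sA; elim/(well_founded_ind (@wo_wf W)) => b IH x; rewrite ti_unfold /iter_step.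
case: pselect => [h|h].
  by case: (cid h) => g [glt _] /= hx; exact: IH g glt _ (sA _ _ hx).
case: pselect => [[g glt]|h2] //= hx; exact: IH g glt _ (hx g glt).
Qed.

Lemma tri3 (a b d u v w : R) : `|a| <= u -> `|b| <= v -> `|d| <= w ->
  `|a + b - d| <= u + v + w.
Proof.
rewrite !ler_norml => /andP [? ?] /andP [? ?] /andP [? ?].
by apply/andP; split; lra.
Qed.

End Aux.

Theorem lemma3p8 (R : realType) (X : completeNormedModType R)
  (Y : normedModType R) (iota : Y -> X)
  (iota_lin : forall (a : R) (y z : Y), iota (a *: y + z) = a *: iota y + iota z)
  (iota_isom : forall y : Y, `|iota y| = `|y|)
  (iota_closed : closed (range iota))
  (P : (X -> R) -> (X -> R)) (HP : star_condition iota P)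
  (W : wellorder) (alpha : W) (eps : R) (heps : 0 < eps) (phi : X -> R) :
  transfinite_iter (szlenk_deriv (3 * eps)) (dual_ball X) alpha phi ->
  (1%:E - delta_Y P eps < (dnorm (phi \o iota))%:E)%E ->
  transfinite_iter (szlenk_deriv eps) (dual_ball Y) alpha (phi \o iota).
Proof.
case: HP => Pdual [Plin Pidem Pker Pnorm _].
have comp_dual (f : X -> R) : is_dual f ->
    is_dual (f \o iota) /\ dnorm (f \o iota) <= dnorm f.
  move=> df.
  have lfi : lin (f \o iota) by move=> a y z /=; rewrite iota_lin (dual_lin df).
  have bd y : `|(f \o iota) y| <= dnorm f * `|y|.
    by rewrite /= -iota_isom dnorm_ub.
  split; first exact: lin_dual lfi bd.
  exact: dnorm_le lfi (dnorm_ge0 df) bd.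
have PY (f : X -> R) : is_dual f -> forall y, P f (iota y) = f (iota y).
  move=> df y.
  have dc := dual_comb (-1) (Pdual _ df) df.
  have : P (fun x => -1 * P f x + f x) = (fun _ => 0).
    rewrite (Plin _ _ _ (Pdual _ df) df) (Pidem _ df); apply: funext => x; ring.
  move=> /(Pker _ dc) /(_ y); lra.
have PnormY (f : X -> R) : is_dual f -> dnorm (f \o iota) <= dnorm (P f).
  move=> df; have -> : f \o iota = P f \o iota.
    by apply: funext => y /=; rewrite PY.
  exact: (comp_dual _ (Pdual _ df)).2.
have HBf (chi : X -> R) : is_dual chi -> dnorm (P chi) <= dnorm (chi \o iota).
  move=> dchi; have [dci _] := comp_dual _ dchi.
  have c0 := dnorm_ge0 dci.
  have fc y : (chi \o iota) y <= dnorm (chi \o iota) * `|iota y|.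
    by rewrite iota_isom (le_trans (ler_norm _)) // dnorm_ub.
  have [xi [lxi ext bxi]] := hahn_banach iota_lin (dual_lin dci) c0 fc.
  have dxi : is_dual xi by exact: lin_dual lxi bxi.
  have dc := dual_comb (-1) dxi dchi.
  have : P (fun x => -1 * xi x + chi x) = (fun _ => 0).
    by apply/(Pker _ dc) => y; rewrite ext /=; ring.
  rewrite Plin // => E.
  have -> : P chi = P xi.
    by apply: funext => x; have := congr1 (fun h => h x) E => /=; lra.
  exact: le_trans (Pnorm _ dxi) (dnorm_le lxi c0 bxi).
pose T1 := @transfinite_iter _ W (szlenk_deriv (3 * eps)) (dual_ball X).
pose T2 := @transfinite_iter _ W (szlenk_deriv eps) (dual_ball Y).
pose Q (f : X -> R) := (1%:E - delta_Y P eps < (dnorm (f \o iota))%:E)%E.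
have sub1 b : T1 b `<=` dual_ball X.
  by apply: ti_sub => A f [].
have core (g : W) : (forall f, T1 g f -> Q f -> T2 g (f \o iota)) ->
    forall f, szlenk_deriv (3 * eps) (T1 g) f -> Q f ->
    szlenk_deriv eps (T2 g) (f \o iota).
  move=> IH f [Tf Hd] Qf; split; first exact: IH.
  move=> N [U [Uo [Uf UN]]].
  have [ys [r [r0 Hr]]] := Uo _ Uf.
  have [df f1] := sub1 _ _ Tf.
  have [m [Hm1 [Hm2 Hm3]]] := t1 Qf.
  have [y0 [y01 hy0]] := dnorm_gt (comp_dual _ df).1 Hm3.
  pose UX := fun h : X -> R => m < `|h (iota y0)| /\
     forall y, y \in ys -> `|h (iota y) - f (iota y)| < r.
  have UXo : wstar_open UX.
    move=> h [h0 h1].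
    have [r1 [r1p H1]] := list_open h1.
    exists (iota y0 :: map iota ys), (Order.min (`|h (iota y0)| - m) r1).
    split; first by rewrite lt_min r1p subr_gt0 h0.
    move=> k dk Hk; split.
      have := Hk (iota y0) (mem_head _ _); rewrite lt_min => /andP [hh _].
      have : `|h (iota y0)| <= `|h (iota y0) - k (iota y0)| + `|k (iota y0)|.
        by rewrite -[X in `|X| <= _](subrK (k (iota y0))) ler_normD.
      by rewrite distrC; lra.
    apply: H1 => x hx; have := Hk x; rewrite in_cons hx orbT => /(_ isT).
    by rewrite lt_min => /andP [].
  have UXf : UX f.
    by split => // y _; rewrite subrr normr0.
  have := Hd UX (ex_intro _ UX (conj UXo (conj UXf (fun g _ h => h)))).
  move=> /ereal_sup_gt [_ [f1' [f2' [[U1 T1f1] [[U2 T2f2] ->]]]]].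
  rewrite lte_fin => Hgt.
  have facts (h : X -> R) : UX h -> T1 g h ->
     [/\ is_dual h, T2 g (h \o iota), N (h \o iota) &
         dnorm (fun x => h x - P h x) < eps].
    move=> [u0 u1] Th; have [dh h1] := sub1 _ _ Th.
    have mh : m < dnorm (h \o iota).
      apply: (lt_le_trans u0); apply: le_trans (dnorm_ub _ (comp_dual _ dh).1) _.
      by rewrite ler_piMr //; exact: dnorm_ge0 (comp_dual _ dh).1.
    have Qh : Q h by apply: (lt_trans Hm1); rewrite lte_fin.
    split => //; first exact: IH.
      apply: UN; first exact: (comp_dual _ dh).1.
      apply: Hr; first exact: (comp_dual _ dh).1.
      by move=> y hy /=; exact: u1.
    have [//|ge] := ltP.
    have : (delta_Y P eps <= (dnorm h - dnorm (P h))%:E)%E.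
      by apply: ereal_inf_lbound; exists h.
    move=> /Hm2 hlt; have := PnormY _ dh; lra.
  have [d1 T21 N1 e1] := facts _ U1 T1f1.
  have [d2 T22 N2 e2] := facts _ U2 T2f2.
  apply: (@lt_le_trans _ _ (dnorm (fun y => f1' (iota y) - f2' (iota y)))%:E).
    pose chi := fun x => f1' x - f2' x.
    have dchi : is_dual chi by exact: dual_sub.
    have Pchi : P chi = (fun x => P f1' x - P f2' x).
      have -> : chi = (fun x => -1 * f2' x + f1' x) by apply: funext => x; rewrite /chi; ring.
      by rewrite Plin //; apply: funext => x; ring.
    have hb := HBf _ dchi.
    have dP : is_dual (P chi) by exact: Pdual.
    have tri : dnorm chi <= dnorm (fun x => f1' x - P f1' x) + dnorm (P chi)
                 + dnorm (fun x => f2' x - P f2' x).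
      apply: (dnorm_le (dual_lin dchi)).
        by rewrite !addr_ge0 ?dnorm_ge0 //; apply: dual_sub => //; exact: Pdual.
      move=> x; rewrite !mulrDl.
      have -> : chi x = (f1' x - P f1' x) + P chi x - (f2' x - P f2' x).
        by rewrite Pchi /chi; ring.
      apply: tri3.
      + apply: (dnorm_ub (f := fun x => f1' x - P f1' x)).
        by apply: dual_sub => //; exact: Pdual.
      + exact: (dnorm_ub (f := P chi)).
      + apply: (dnorm_ub (f := fun x => f2' x - P f2' x)).
        by apply: dual_sub => //; exact: Pdual.
    rewrite lte_fin; rewrite /chi in hb tri; simpl in hb; lra.
  by apply: ereal_sup_ubound; exists (f1' \o iota), (f2' \o iota).
have main : forall b f, T1 b f -> Q f -> T2 b (f \o iota).
  elim/(well_founded_ind (@wo_wf W)) => b IH f.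
  rewrite /T1 /T2 !ti_unfold /iter_step.
  case: pselect => [h|h].
    case: (cid h) => g [glt _] /=; exact: (core g (IH g glt) f).
  case: pselect => [h2|h2] /=.
    by move=> Hall Qf g' h'; exact: IH g' h' f (Hall g' h') Qf.
  move=> [df f1] _; have [dfi le] := comp_dual _ df; split => //.
  exact: le_trans le f1.
exact: main.
Qed.
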